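(* Let $f_{1,\infty}=\{f_n\}_{n=1}^\infty$ be a periodic sequence of continuous maps $f_n:[0,1]\to[0,1]$ (i.e. there is $k\in\mathbb{N}$ with $f_{j+kl}=f_j$ for all $l\in\mathbb{N}$, $1\le j\le k$). If $([0,1],f_{1,\infty})$ is multi-transitive, then it is strongly multi-sensitive.
   Context: Use the usual metric $d$ on $[0,1]$. Write $f_i^n=f_{n+i-1}\circ\cdots\circ f_i$, $f_i^0=\mathrm{id}$, and $f_{1,\infty}^{[k]}=\{f^k_{k(n-1)+1}\}_{n=1}^\infty$ (its $n$-fold composition from index $1$ is $f_1^{kn}$). The system is multi-transitive if for every $m\in\mathbb{N}$ and all nonempty open $U_1,\dots,U_m,V_1,\dots,V_m$ there is $k\in\mathbb{N}$ with $f_1^{ik}(U_i)\cap V_i\ne\varnothing$ for each $i=1,\dots,m$. For $V\subseteq X$, $\delta>0$: $N_{f_{1,\infty}}(V,\delta)=\{n\in\mathbb{N}:\exists u,v\in V,\ d(f_1^n(u),f_1^n(v))>\delta\}$. For $\mathbf{v}=(v_1,\dots,v_r)\in\mathbb{N}^r$, the system is multi-sensitive with respect to $\mathbf{v}$ if there is $\delta>0$ such that $\bigcap_{i=1}^r N_{f_{1,\infty}^{[v_i]}}(U_i,\delta)\ne\varnothing$ for all nonempty open $U_1,\dots,U_r$; it is strongly multi-sensitive if it is multi-sensitive with respect to every vector in $\mathbb{N}^r$, for every $r\in\mathbb{N}$. *)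

(* Defs.v *)
From Stdlib Require Import Reals Lra Lia.
Open Scope R_scope.

Definition I01 : Type := { x : R | 0 <= x <= 1 }.
Definition val01 (x : I01) : R := proj1_sig x.
Definition d01 (x y : I01) : R := Rabs (val01 x - val01 y).

Definition cont01 (g : I01 -> I01) : Prop :=
  forall x (eps : R), 0 < eps ->
    exists delta, 0 < delta /\
      forall y, d01 y x < delta -> d01 (g y) (g x) < eps.

Definition open01 (U : I01 -> Prop) : Prop :=
  forall x, U x -> exists eps, 0 < eps /\ forall y, d01 y x < eps -> U y.

Definition nonempty01 (U : I01 -> Prop) : Prop := exists x, U x.

(* A nonautonomous system f_{1,oo} = {f_n}_{n>=1} is a map nat -> (I01 -> I01);
   only indices n >= 1 are used (f 0 is irrelevant). *)

Fixpoint comp (f : nat -> I01 -> I01) (i n : nat) (x : I01) : I01 :=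
  match n with
  | O => x
  | S m => f (i + m)%nat (comp f i m x)
  end.

Definition block (f : nat -> I01 -> I01) (k : nat) : nat -> I01 -> I01 :=
  fun n => comp f (k * (n - 1) + 1)%nat k.

Definition periodic (f : nat -> I01 -> I01) : Prop :=
  exists k : nat, (1 <= k)%nat /\
    forall l j : nat, (1 <= l)%nat -> (1 <= j <= k)%nat -> f (j + k * l)%nat = f j.

Definition multi_transitive (f : nat -> I01 -> I01) : Prop :=
  forall (m : nat) (U V : nat -> I01 -> Prop), (1 <= m)%nat ->
    (forall i, (1 <= i <= m)%nat ->
       open01 (U i) /\ nonempty01 (U i) /\ open01 (V i) /\ nonempty01 (V i)) ->
    exists k : nat, (1 <= k)%nat /\
      forall i, (1 <= i <= m)%nat ->
        exists x, U i x /\ V i (comp f 1 (i * k) x).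

Definition Nset (f : nat -> I01 -> I01) (V : I01 -> Prop) (delta : R) (n : nat) : Prop :=
  (1 <= n)%nat /\
  exists u v, V u /\ V v /\ d01 (comp f 1 n u) (comp f 1 n v) > delta.

(* Multi-sensitivity with respect to v = (v_1,...,v_r) in N^r
   (v given as a function, only indices 1..r matter). *)
Definition multi_sensitive_wrt (f : nat -> I01 -> I01) (r : nat) (v : nat -> nat) : Prop :=
  exists delta, 0 < delta /\
    forall U : nat -> I01 -> Prop,
      (forall i, (1 <= i <= r)%nat -> open01 (U i) /\ nonempty01 (U i)) ->
      exists n, forall i, (1 <= i <= r)%nat -> Nset (block f (v i)) (U i) delta n.

Definition strongly_multi_sensitive (f : nat -> I01 -> I01) : Prop :=
  forall (r : nat) (v : nat -> nat), (1 <= r)%nat ->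
    (forall i, (1 <= i <= r)%nat -> (1 <= v i)%nat) ->
    multi_sensitive_wrt f r v.

(* Main.v *)
Require Import Defs.
From Stdlib Require Import Reals Lra Lia ProofIrrelevance.
Require Import Defs.
Open Scope R_scope.

Lemma val_inj (x y : I01) : val01 x = val01 y -> x = y.
Proof.
  destruct x as [x Hx], y as [y Hy]; unfold val01; simpl; intros ->.
  f_equal; apply proof_irrelevance.
Qed.

Lemma clamp_pf (t : R) : 0 <= Rmax 0 (Rmin t 1) <= 1.
Proof. unfold Rmax, Rmin; repeat destruct Rle_dec; lra. Qed.

Definition clamp (t : R) : I01 := exist _ (Rmax 0 (Rmin t 1)) (clamp_pf t).

Lemma clamp_val t : 0 <= t <= 1 -> val01 (clamp t) = t.
Proof. intros; unfold clamp, val01; simpl; unfold Rmax, Rmin; repeat destruct Rle_dec; lra. Qed.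

Lemma clamp_lip s t : Rabs (val01 (clamp s) - val01 (clamp t)) <= Rabs (s - t).
Proof.
  unfold clamp, val01; simpl; unfold Rmax, Rmin; repeat destruct Rle_dec;
  unfold Rabs; repeat destruct Rcase_abs; lra.
Qed.

Lemma clamp_id (x : I01) : clamp (val01 x) = x.
Proof. apply val_inj, clamp_val. destruct x; simpl; auto. Qed.

Definition ctsR (h : I01 -> R) : Prop :=
  forall x eps, 0 < eps -> exists delta, 0 < delta /\
    forall y, d01 y x < delta -> Rabs (h y - h x) < eps.

Lemma ctsR_continuity h : ctsR h -> continuity (fun t => h (clamp t)).
Proof.
  intros Hh t eps Heps.
  destruct (Hh (clamp t) eps Heps) as [d [Hd H]].
  exists d; split; auto. intros s [_ Hs]. simpl in *. unfold R_dist in *.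
  apply H. unfold d01. eapply Rle_lt_trans; [apply clamp_lip|]. auto.
Qed.

Lemma ivt01 (phi : I01 -> R) (a b : I01) : ctsR phi ->
  val01 a <= val01 b -> phi a * phi b <= 0 ->
  exists x, val01 a <= val01 x <= val01 b /\ phi x = 0.
Proof.
  intros Hc Hab Hp.
  destruct (IVT_cor (fun t => phi (clamp t)) (val01 a) (val01 b) (ctsR_continuity _ Hc) Hab)
    as [z [Hz1 Hz2]].
  { rewrite !clamp_id; auto. }
  assert (0 <= val01 a) by (destruct a as [? Ha]; unfold val01; simpl; lra).
  assert (val01 b <= 1) by (destruct b as [? Hb]; unfold val01; simpl; lra).
  exists (clamp z). rewrite clamp_val by lra. auto.
Qed.

Lemma cts_sub_id (H : I01 -> I01) : cont01 H -> ctsR (fun x => val01 (H x) - val01 x).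
Proof.
  intros Hc x eps Heps.
  destruct (Hc x (eps/2)) as [d [Hd Hy]]; [lra|].
  exists (Rmin d (eps/2)); split. { apply Rmin_pos; lra. }
  intros y Hyx. assert (d01 y x < d) by (eapply Rlt_le_trans; [apply Hyx| apply Rmin_l]).
  assert (d01 y x < eps/2) by (eapply Rlt_le_trans; [apply Hyx| apply Rmin_r]).
  specialize (Hy y H0). unfold d01 in *.
  unfold Rabs in *; repeat destruct Rcase_abs; lra.
Qed.

Lemma cts_sub_c (H : I01 -> I01) c : cont01 H -> ctsR (fun x => val01 (H x) - c).
Proof.
  intros Hc x eps Heps.
  destruct (Hc x eps Heps) as [d [Hd Hy]].
  exists d; split; auto. intros y Hyx. specialize (Hy y Hyx). unfold d01 in *.
  replace (val01 (H y) - c - (val01 (H x) - c)) with (val01 (H y) - val01 (H x)) by ring. auto.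
Qed.

Lemma cont01_comp (g h : I01 -> I01) : cont01 g -> cont01 h -> cont01 (fun x => g (h x)).
Proof.
  intros Hg Hh x eps Heps.
  destruct (Hg (h x) eps Heps) as [d1 [Hd1 H1]].
  destruct (Hh x d1 Hd1) as [d2 [Hd2 H2]].
  exists d2; split; auto.
Qed.

Lemma comp_cont (f : nat -> I01 -> I01) (i n : nat) : (forall n, (1 <= n)%nat -> cont01 (f n)) -> (1 <= i)%nat -> cont01 (comp f i n).
Proof.
  intros Hc Hi. induction n.
  - intros x eps Heps. exists eps; split; auto.
  - apply (cont01_comp (f (i + n)%nat) (comp f i n)); auto. apply Hc; lia.
Qed.

Lemma comp_add (f : nat -> I01 -> I01) (i n m : nat) x : comp f i (n + m) x = comp f (i + n) m (comp f i n x).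
Proof.
  induction m.
  - rewrite Nat.add_0_r; reflexivity.
  - rewrite Nat.add_succ_r. simpl. rewrite IHm, Nat.add_assoc. reflexivity.
Qed.

Lemma per_ext (f : nat -> I01 -> I01) (p : nat) : (1 <= p)%nat ->
  (forall l j : nat, (1 <= l)%nat -> (1 <= j <= p)%nat -> f (j + p * l)%nat = f j) ->
  forall n l, (1 <= n)%nat -> f (n + p * l)%nat = f n.
Proof.
  intros Hp H n l Hn.
  pose proof (Nat.div_mod_eq (n-1) p) as E.
  pose proof (Nat.mod_upper_bound (n-1) p ltac:(lia)) as E2.
  set (j := ((n-1) mod p + 1)%nat). set (l0 := ((n-1)/p)%nat) in *.
  assert (K : forall l', f (j + p * l')%nat = f j).
  { intros [|l']. - rewrite Nat.mul_0_r, Nat.add_0_r; auto. - apply H; unfold j; lia. }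
  replace (n + p*l)%nat with (j + p * (l0 + l))%nat.
  2:{ rewrite Nat.mul_add_distr_l. unfold j. lia. }
  rewrite K, <- (K l0). f_equal. unfold j; lia.
Qed.

Lemma comp_shift (f : nat -> I01 -> I01) (p a m : nat) x :
  (forall n l, (1 <= n)%nat -> f (n + p * l)%nat = f n) ->
  comp f (1 + p * a) m x = comp f 1 m x.
Proof.
  intros H. induction m; simpl; auto. change (S (p*a)) with (1 + p*a)%nat. rewrite IHm.
  replace (S (p * a + m)) with (S m + p*a)%nat by lia.
  rewrite H by lia. reflexivity.
Qed.

Lemma Gadd (f : nat -> I01 -> I01) (p a b : nat) x :
  (forall n l, (1 <= n)%nat -> f (n + p * l)%nat = f n) ->
  comp f 1 (p * (a + b)) x = comp f 1 (p * b) (comp f 1 (p * a) x).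
Proof.
  intros H. rewrite Nat.mul_add_distr_l, comp_add, comp_shift; auto.
Qed.

Lemma block_comp (f : nat -> I01 -> I01) (v n : nat) x : comp (block f v) 1 n x = comp f 1 (v * n) x.
Proof.
  induction n; simpl.
  - rewrite Nat.mul_0_r; reflexivity.
  - rewrite IHn. unfold block. replace (v * S n)%nat with (v * n + v)%nat by lia.
    rewrite comp_add. f_equal. lia.
Qed.

Lemma Giter (f : nat -> I01 -> I01) (p M : nat) q :
  (forall n l, (1 <= n)%nat -> f (n + p * l)%nat = f n) ->
  comp f 1 (p * M) q = q -> forall t, comp f 1 (p * (M * t)) q = q.
Proof.
  intros H Hq t. induction t.
  - rewrite !Nat.mul_0_r; reflexivity.
  - replace (M * S t)%nat with (M * t + M)%nat by lia. rewrite Gadd, IHt; auto.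
Qed.

Definition full01 : I01 -> Prop := fun _ => True.

Lemma open_full : open01 full01.
Proof. intros x _. exists 1; split; [lra| intros; exact I]. Qed.

Lemma nonempty_full : nonempty01 full01.
Proof. exists (clamp 0); exact I. Qed.

Lemma open_int a b : open01 (fun x => a < val01 x < b).
Proof.
  intros x Hx. exists (Rmin (val01 x - a) (b - val01 x)). split.
  - apply Rmin_pos; lra.
  - intros y Hy. unfold d01 in Hy.
    pose proof (Rmin_l (val01 x - a) (b - val01 x)).
    pose proof (Rmin_r (val01 x - a) (b - val01 x)).
    apply Rabs_def2 in Hy. lra.
Qed.

Lemma nonempty_int a b : 0 <= a < b -> b <= 1 -> nonempty01 (fun x => a < val01 x < b).
Proof.
  intros. exists (clamp ((a+b)/2)). rewrite clamp_val by lra. lra.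
Qed.

Lemma slot1 f s U V : multi_transitive f -> (1 <= s)%nat ->
  open01 U -> nonempty01 U -> open01 V -> nonempty01 V ->
  exists k, (1 <= k)%nat /\ exists x, U x /\ V (comp f 1 (s * k) x).
Proof.
  intros MT Hs HU1 HU2 HV1 HV2.
  destruct (MT s (fun j => if Nat.eq_dec j s then U else full01)
                 (fun j => if Nat.eq_dec j s then V else full01)) as [k [Hk H]]; auto.
  - intros i Hi. destruct (Nat.eq_dec i s);
      repeat split; auto using open_full, nonempty_full.
  - exists k; split; auto. specialize (H s ltac:(lia)).
    destruct (Nat.eq_dec s s); [auto| congruence].
Qed.

Lemma slot2 f s U1 V1 U2 V2 : multi_transitive f -> (1 <= s)%nat ->
  open01 U1 -> nonempty01 U1 -> open01 V1 -> nonempty01 V1 ->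
  open01 U2 -> nonempty01 U2 -> open01 V2 -> nonempty01 V2 ->
  exists k, (1 <= k)%nat /\ (exists x, U1 x /\ V1 (comp f 1 (s * k) x))
     /\ (exists x, U2 x /\ V2 (comp f 1 (2 * s * k) x)).
Proof.
  intros MT Hs ? ? ? ? ? ? ? ?.
  destruct (MT (2*s)%nat
     (fun j => if Nat.eq_dec j s then U1 else if Nat.eq_dec j (2*s) then U2 else full01)
     (fun j => if Nat.eq_dec j s then V1 else if Nat.eq_dec j (2*s) then V2 else full01))
     as [k [Hk HH]]; [lia| |].
  - intros i Hi. destruct (Nat.eq_dec i s); [|destruct (Nat.eq_dec i (2*s))];
      repeat split; auto using open_full, nonempty_full.
  - exists k; split; auto. split.
    + specialize (HH s ltac:(lia)). destruct (Nat.eq_dec s s); [auto| congruence].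
    + specialize (HH (2*s)%nat ltac:(lia)). destruct (Nat.eq_dec (2*s) s); [lia|].
      destruct (Nat.eq_dec (2*s) (2*s)); [auto| congruence].
Qed.

Lemma fixed_of (H : I01 -> I01) x : val01 (H x) - val01 x = 0 -> H x = x.
Proof. intros; apply val_inj; lra. Qed.

Lemma periodic_pt f p a b :
  (forall n : nat, (1 <= n)%nat -> cont01 (f n)) ->
  (forall n l, (1 <= n)%nat -> f (n + p * l)%nat = f n) ->
  (1 <= p)%nat -> multi_transitive f -> 0 <= a < b -> b <= 1 ->
  exists q M, (1 <= M)%nat /\ a < val01 q < b /\ comp f 1 (p * M) q = q.
Proof.
  intros Hc Hper Hp MT Hab Hb.
  set (c1 := a + (b-a)/3). set (c2 := b - (b-a)/3).
  destruct (slot2 f p (fun x => a < val01 x < c1) (fun x => c2 < val01 x < b)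
                      (fun x => c2 < val01 x < b) (fun x => a < val01 x < c1) MT Hp)
    as [k [Hk [[y [Hy1 Hy2]] [z [Hz1 Hz2]]]]];
    try apply open_int; try (apply nonempty_int; unfold c1, c2; lra).
  set (h := comp f 1 (p * k)).
  assert (Hhh : forall x, comp f 1 (2 * p * k) x = h (h x)).
  { intros x. replace (2*p*k)%nat with (p * (k + k))%nat by lia. unfold h. apply Gadd; auto. }
  rewrite Hhh in Hz2.
  assert (Hch : cont01 h) by (apply comp_cont; auto; lia).
  set (w := h y). unfold c1, c2 in *. assert (Hw : b - (b-a)/3 < val01 w < b) by exact Hy2.
  destruct (Rle_dec (val01 (h w)) (val01 w)).
  - destruct (ivt01 (fun x => val01 (h x) - val01 x) y w) as [x [Hx1 Hx2]].
    + apply cts_sub_id; auto.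
    + lra.
    + cbv beta. fold w. nra.
    + exists x, k. split; auto. split; [lra|]. apply fixed_of; auto.
  - destruct (ivt01 (fun x => val01 (h (h x)) - val01 x) y z) as [x [Hx1 Hx2]].
    + apply cts_sub_id. apply cont01_comp; auto.
    + lra.
    + cbv beta. fold w. nra.
    + exists x, (k + k)%nat. split; [lia|]. split; [lra|].
      rewrite Gadd; auto. apply (fixed_of (fun x => h (h x))); auto.
Qed.

Lemma perU f p U :
  (forall n : nat, (1 <= n)%nat -> cont01 (f n)) ->
  (forall n l, (1 <= n)%nat -> f (n + p * l)%nat = f n) ->
  (1 <= p)%nat -> multi_transitive f -> open01 U -> nonempty01 U ->
  exists L B, (1 <= L)%nat /\ forall t, (exists c, t = (L * c)%nat) -> (B <= t)%nat ->
    exists u v, U u /\ U v /\ d01 (comp f 1 (p * t) u) (comp f 1 (p * t) v) > 1/2.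
Proof.
  intros Hc Hper Hp MT HU [x0 Hx0].
  destruct (HU x0 Hx0) as [eps [Heps Hin]].
  assert (Hx0r : 0 <= val01 x0 <= 1) by (destruct x0 as [? ?]; unfold val01; simpl; lra).
  set (a := Rmax 0 (val01 x0 - eps/2)). set (b := Rmin 1 (val01 x0 + eps/2)).
  assert (Hab : 0 <= a < b /\ b <= 1 /\ val01 x0 - eps/2 <= a /\ b <= val01 x0 + eps/2).
  { unfold a, b, Rmax, Rmin; repeat destruct Rle_dec; lra. }
  assert (inU : forall y, a < val01 y < b -> U y).
  { intros y Hy. apply Hin. unfold d01. apply Rabs_def1; lra. }
  set (m := (a + b) / 2).
  destruct (periodic_pt f p a m) as [q1 [M1 [HM1 [Hq1 Fq1]]]]; auto; try (unfold m; lra).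
  destruct (periodic_pt f p m b) as [q2 [M2 [HM2 [Hq2 Fq2]]]]; auto; try (unfold m; lra).
  unfold m in *.
  set (M := (M1 * M2)%nat).
  assert (HM : (1 <= M)%nat) by (unfold M; nia).
  assert (F1 : comp f 1 (p * M) q1 = q1).
  { unfold M. apply Giter; auto. }
  assert (F2 : comp f 1 (p * M) q2 = q2).
  { unfold M. replace (M1 * M2)%nat with (M2 * M1)%nat by ring. apply Giter; auto. }
  set (H := comp f 1 (p * M)).
  assert (HcH : cont01 H) by (apply comp_cont; auto; lia).
  assert (cover : forall y, val01 q1 <= y <= val01 q2 ->
           exists x, val01 q1 <= val01 x <= val01 q2 /\ val01 (H x) = y).
  { intros y Hy.
    destruct (ivt01 (fun x => val01 (H x) - y) q1 q2) as [x [Hx1 Hx2]].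
    - apply cts_sub_c; auto.
    - lra.
    - cbv beta. assert (E1 : H q1 = q1) by exact F1. assert (E2 : H q2 = q2) by exact F2.
      rewrite E1, E2. nra.
    - exists x. split; auto. lra. }
  set (Sj := fun (j : nat) (y : R) => exists x, val01 q1 <= val01 x <= val01 q2 /\
                 val01 (comp f 1 (p * (M * j)) x) = y).
  assert (mono : forall j y, Sj j y -> Sj (S j) y).
  { intros j y [x [Hx1 Hx2]].
    destruct (cover (val01 x) Hx1) as [x' [Hx'1 Hx'2]].
    exists x'. split; auto.
    replace (M * S j)%nat with (M + M * j)%nat by lia.
    rewrite Gadd; auto. fold H. rewrite (val_inj (H x') x Hx'2). auto. }
  assert (monole : forall j j' y, (j <= j')%nat -> Sj j y -> Sj j' y).
  { intros j j' y Hle. induction Hle; auto. }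
  set (U' := fun x => val01 q1 < val01 x < val01 q2).
  assert (HU'1 : open01 U') by apply open_int.
  assert (HU'2 : nonempty01 U').
  { exists (clamp ((val01 q1 + val01 q2)/2)). unfold U'. rewrite clamp_val; lra. }
  assert (HpM : (1 <= p * M)%nat) by nia.
  destruct (slot1 f (p * M) U' (fun x => -1 < val01 x < 1/4) MT HpM HU'1 HU'2)
    as [k1 [Hk1 [x1 [Hx1 Hv1]]]];
    [apply open_int| exists (clamp 0); rewrite clamp_val; lra |].
  destruct (slot1 f (p * M) U' (fun x => 3/4 < val01 x < 2) MT HpM HU'1 HU'2)
    as [k2 [Hk2 [x2 [Hx2 Hv2]]]];
    [apply open_int| exists (clamp 1); rewrite clamp_val; lra |].
  rewrite <- Nat.mul_assoc in Hv1, Hv2.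
  exists M, (M * (k1 + k2))%nat. split; auto.
  intros t [c ->] Hct.
  assert (Hc12 : (k1 + k2 <= c)%nat) by nia.
  assert (S1 : Sj c (val01 (comp f 1 (p * (M * k1)) x1))).
  { apply (monole k1); [lia|]. exists x1. unfold U' in Hx1. split; [lra| auto]. }
  assert (S2 : Sj c (val01 (comp f 1 (p * (M * k2)) x2))).
  { apply (monole k2); [lia|]. exists x2. unfold U' in Hx2. split; [lra| auto]. }
  destruct S1 as [u [Hu1 Hu2]]. destruct S2 as [v [Hv1' Hv2']].
  exists u, v. split; [apply inU; lra|]. split; [apply inU; lra|].
  unfold d01. rewrite Hu2, Hv2'. unfold Rabs; destruct Rcase_abs; lra.
Qed.

Lemma combine (Q : nat -> nat -> Prop) (r : nat) :
  (forall i, (1 <= i <= r)%nat -> exists L B, (1 <= L)%nat /\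
     forall t, (exists c, t = (L * c)%nat) -> (B <= t)%nat -> Q i t) ->
  exists L B, (1 <= L)%nat /\ forall i, (1 <= i <= r)%nat ->
     forall t, (exists c, t = (L * c)%nat) -> (B <= t)%nat -> Q i t.
Proof.
  induction r; intros H.
  - exists 1%nat, 0%nat. split; [lia|]. intros; lia.
  - destruct IHr as [L1 [B1 [HL1 H1]]].
    { intros i Hi; apply H; lia. }
    destruct (H (S r) ltac:(lia)) as [L2 [B2 [HL2 H2]]].
    exists (L1 * L2)%nat, (B1 + B2)%nat. split; [nia|].
    intros i Hi t [c ->] Ht.
    destruct (Nat.eq_dec i (S r)) as [->|Hne].
    + apply H2; [exists (L1 * c)%nat; ring| lia].
    + apply H1; [lia| exists (L2 * c)%nat; ring| lia].
Qed.

Theorem mainTheorem3 (f : nat -> I01 -> I01) :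
  (forall n : nat, (1 <= n)%nat -> cont01 (f n)) ->
  periodic f ->
  multi_transitive f ->
  strongly_multi_sensitive f.
Proof.
  intros Hc [p [Hp Hper0]] MT r v Hr Hv.
  pose proof (per_ext f p Hp Hper0) as Hper.
  exists (1/2). split; [lra|]. intros U HU.
  destruct (combine (fun i t => exists u w, U i u /\ U i w /\
       d01 (comp f 1 (p * t) u) (comp f 1 (p * t) w) > 1/2) r) as [L [B [HL HLB]]].
  { intros i Hi. destruct (HU i Hi). apply perU; auto. }
  exists (p * (L * (B + 1)))%nat. intros i Hi. split; [nia|].
  destruct (HLB i Hi (L * (v i * (B + 1)))%nat) as [u [w [Hu [Hw Hd]]]].
  - exists (v i * (B + 1))%nat; reflexivity.
  - specialize (Hv i Hi). nia.
  - exists u, w. split; auto. split; auto. rewrite !block_comp.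
    replace (v i * (p * (L * (B + 1))))%nat with (p * (L * (v i * (B + 1))))%nat by ring.
    auto.
Qed.
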